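(* Let $|\Psi\rangle=|\Psi'\rangle\otimes|\Phi\rangle$, where $|\Psi'\rangle$ and $|\Phi\rangle$ are $M$-party stabilizer states (each party $\alpha$ holding some qubits of each), and suppose the stabilizer group $S_\Phi$ of $|\Phi\rangle$ satisfies $S_\Phi=\sum_{\alpha\in M}(S_\Phi)_{\hat\alpha}$. Then $\Gamma(\Psi)=\{\rho'\otimes|\Phi\rangle\langle\Phi|:\ \rho'\in\Gamma(\Psi')\}$.
   Context: Let $G^n\cong\mathbb{F}_2^{2n}$, with elements $f=(a_1,b_1,\dots,a_n,b_n)$; $\sigma_{00}=I,\sigma_{10}=\sigma^x,\sigma_{01}=\sigma^z,\sigma_{11}=\sigma^y$, $\sigma(f)=\sigma_{a_1b_1}\otimes\cdots\otimes\sigma_{a_nb_n}$; symplectic form $\omega(f,f')=\sum_j(a_jb_j'+b_ja_j')\bmod 2$. A stabilizer state with stabilizer group $S$ ($S$ self-dual, i.e. $S=\{f:\omega(f,g)=0\ \forall g\in S\}$) is the unique up-to-phase unit vector with $\sigma(f)|\Psi\rangle=\epsilon(f)|\Psi\rangle$ for all $f\in S$ for fixed consistent signs. In the $M$-party setting, party $\alpha$ holds $n_\alpha$ qubits; $f_\alpha$ is the restriction of $f$ to party $\alpha$'s qubits; co-local subgroup $S_{\hat\alpha}=\{g\in S:g_\alpha=0\}$. For an $M$-party pure state $|\Psi\rangle$, $\Gamma(\Psi)$ is the set of density operators $\rho$ on the same qubits with $\mathrm{Tr}_\alpha\rho=\mathrm{Tr}_\alpha|\Psi\rangle\langle\Psi|$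 for all $\alpha\in M$, $\mathrm{Tr}_\alpha$ being the partial trace over all qubits of party $\alpha$. *)

(* Defs.v *)
(* Amplitudes live in an arbitrary numClosedFieldType C
   (e.g. the complex numbers R[i]). *)
From HB Require Import structures.
From mathcomp Require Import all_boot all_order all_algebra.
Set Implicit Arguments. Unset Strict Implicit. Unset Printing Implicit Defensive.
Import Order.TTheory GRing.Theory Num.Theory.
Local Open Scope ring_scope.

(* computational basis states of n qubits *)
Definition bits (n : nat) := {ffun 'I_n -> bool}.
(* elements f = (a_1,b_1,...,a_n,b_n) of G^n = F_2^{2n} *)
Definition pauli (n : nat) := {ffun 'I_n -> bool * bool}.

Section Defs.
Variable C : numClosedFieldType.

(* <y| sigma_{ab} |x> with sigma_{ab} = i^{ab} X^a Z^b
   (sigma_00 = I, sigma_10 = X, sigma_01 = Z, sigma_11 = Y) *)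
Definition sigma1 (ab : bool * bool) (y x : bool) : C :=
  if y == (x (+) ab.1) then 'i ^+ (ab.1 && ab.2) * (-1) ^+ (ab.2 && x) else 0.

Definition sigma n (f : pauli n) (y x : bits n) : C :=
  \prod_(j < n) sigma1 (f j) (y j) (x j).

Definition op n := bits n -> bits n -> C.

Definition apply_op n (A : op n) (v : bits n -> C) (y : bits n) : C :=
  \sum_(x : bits n) A y x * v x.

Definition omega n (f g : pauli n) : bool :=
  odd (\sum_(j < n) (((f j).1 && (g j).2) + ((f j).2 && (g j).1)))%N.

Definition self_dual n (S : {set pauli n}) : Prop :=
  forall f, (f \in S) = [forall g in S, ~~ omega f g].

Definition unit_vec n (v : bits n -> C) : Prop :=
  \sum_(x : bits n) v x * (v x)^* = 1.

Definition stabilizer_state n (S : {set pauli n}) (psi : bits n -> C) : Prop :=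
  self_dual S /\ unit_vec psi /\
  forall f, f \in S -> exists e : C, (e = 1 \/ e = -1) /\
    forall y, apply_op (sigma f) psi y = e * psi y.

Definition pxor n (f g : pauli n) : pauli n :=
  [ffun j => ((f j).1 (+) (g j).1, (f j).2 (+) (g j).2)].
Definition pzero n : pauli n := [ffun _ => (false, false)].

Definition colocal n M (party : 'I_n -> 'I_M) (S : {set pauli n}) (a : 'I_M)
  : {set pauli n} :=
  [set g in S | [forall j, (party j == a) ==> (g j == (false, false))]].

Definition sum_of_colocal n M (party : 'I_n -> 'I_M) (S : {set pauli n}) : Prop :=
  forall g, g \in S <->
    exists h : 'I_M -> pauli n,
      (forall a, h a \in colocal party S a) /\ g = \big[@pxor n/pzero n]_(a < M) h a.

Definition density n (rho : op n) : Prop :=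
  (forall v : bits n -> C,
     0 <= \sum_(x : bits n) \sum_(y : bits n) (v x)^* * rho x y * v y) /\
  \sum_(x : bits n) rho x x = 1.

Definition proj n (psi : bits n -> C) : op n := fun x y => psi x * (psi y)^*.

Definition merge n M (party : 'I_n -> 'I_M) (a : 'I_M) (x z : bits n) : bits n :=
  [ffun j => if party j == a then z j else x j].

(* matrix element of Tr_a rho (partial trace over all qubits of party a);
   it depends only on the bits of x, y outside party a *)
Definition ptrace n M (party : 'I_n -> 'I_M) (a : 'I_M) (rho : op n)
  (x y : bits n) : C :=
  \sum_(z : bits n | [forall j, (party j != a) ==> ~~ z j])
     rho (merge party a x z) (merge party a y z).

Definition Gamma n M (party : 'I_n -> 'I_M) (psi : bits n -> C) (rho : op n) : Prop :=
  density rho /\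
  forall a x y, ptrace party a rho x y = ptrace party a (proj psi) x y.

(* tensor products: first n1 qubits, then n2 qubits *)
Definition lpart n1 n2 (x : bits (n1 + n2)) : bits n1 := [ffun i => x (lshift n2 i)].
Definition rpart n1 n2 (x : bits (n1 + n2)) : bits n2 := [ffun i => x (rshift n1 i)].

Definition join_party n1 n2 M (p1 : 'I_n1 -> 'I_M) (p2 : 'I_n2 -> 'I_M)
  (j : 'I_(n1 + n2)) : 'I_M :=
  match split j with inl i => p1 i | inr i => p2 i end.

Definition tensor_vec n1 n2 (u : bits n1 -> C) (v : bits n2 -> C)
  : bits (n1 + n2) -> C :=
  fun x => u (lpart x) * v (rpart x).

Definition tensor_op n1 n2 (A : op n1) (B : op n2) : op (n1 + n2) :=
  fun x y => A (lpart x) (lpart y) * B (rpart x) (rpart y).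

End Defs.

(* Main.v *)
Require Import Defs.
From HB Require Import structures.
From mathcomp Require Import all_boot all_order all_algebra ring.
From Stdlib Require Import FunctionalExtensionality.
Import Order.TTheory GRing.Theory Num.Theory.
Local Open Scope ring_scope.
Set Implicit Arguments. Unset Strict Implicit. Unset Printing Implicit Defensive.

Definition catb n1 n2 (a : bits n1) (b : bits n2) : bits (n1 + n2) :=
  [ffun j => match split j with inl i => a i | inr i => b i end].

Lemma lpart_cat n1 n2 (a : bits n1) (b : bits n2) : lpart (catb a b) = a.
Proof. by apply/ffunP=> i; rewrite !ffunE (unsplitK (inl i)). Qed.
Lemma rpart_cat n1 n2 (a : bits n1) (b : bits n2) : rpart (catb a b) = b.
Proof. by apply/ffunP=> i; rewrite !ffunE (unsplitK (inr i)). Qed.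
Lemma cat_parts n1 n2 (x : bits (n1 + n2)) : catb (lpart x) (rpart x) = x.
Proof.
apply/ffunP=> j; rewrite !ffunE; case: splitP => i Ej.
  have -> : j = lshift n2 i by apply: val_inj.
  by rewrite ffunE.
have -> : j = rshift n1 i by apply: val_inj.
by rewrite ffunE.
Qed.

Section S.
Variable C : numClosedFieldType.

Lemma sum_cat n1 n2 (F : bits (n1 + n2) -> C) :
  \sum_x F x = \sum_a \sum_b F (catb a b).
Proof.
rewrite pair_big /=.
rewrite (reindex (fun p : bits n1 * bits n2 => catb p.1 p.2)) //.
exists (fun x => (lpart x, rpart x)) => [[a b] _|x _] /=.
  by rewrite lpart_cat rpart_cat.
by rewrite cat_parts.
Qed.

End S.

Section P.
Variable C : numClosedFieldType.

Lemma sum_bool2 (F : bool * bool -> C) :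
  \sum_ab F ab = F (true,true) + F (true,false) + F (false,true) + F (false,false).
Proof.
rewrite (eq_bigr (fun p => F (p.1,p.2))); last by case.
rewrite -(pair_bigA _ (fun a b => F (a,b))) /= !big_bool /=.
by rewrite addrA.
Qed.

Lemma sum_b (F : bool -> C) : \sum_b F b = F true + F false.
Proof. by rewrite big_bool. Qed.

Lemma iE : ('i : C) * 'i = -1.
Proof. by rewrite -expr2 sqrCi. Qed.

Lemma cM (x y : C) : (x * y)^* = x^* * y^*. Proof. by rewrite rmorphM. Qed.
Lemma cN (x : C) : (- x)^* = - x^*. Proof. by rewrite rmorphN. Qed.
Lemma c1 : (1 : C)^* = 1. Proof. by rewrite rmorph1. Qed.
Lemma c0 : (0 : C)^* = 0. Proof. by rewrite rmorph0. Qed.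
Ltac psimp := rewrite ?(c0, cM, cN, c1, conjCi, expr0, expr1, mulr0, mul0r, mulr1, mul1r, addr0, add0r, mulrN, mulNr, opprK, iE).

Lemma s1_herm ab y x : (sigma1 C ab y x)^* = sigma1 C ab x y.
Proof.
case: ab => a b; case: a; case: b; case: y; case: x;
  rewrite /sigma1 /=; psimp; try ring.
Qed.

Lemma s1_sq ab y x : \sum_z sigma1 C ab y z * sigma1 C ab z x = (y == x)%:R.
Proof.
rewrite sum_b; case: ab => a b; case: a; case: b; case: y; case: x;
  rewrite /sigma1 /=; psimp; try ring.
Qed.

Lemma s1_comm (f g : bool * bool) y x :
  \sum_z sigma1 C g y z * sigma1 C f z x =
  (-1) ^+ ((f.1 && g.2) + (f.2 && g.1))%N * \sum_z sigma1 C f y z * sigma1 C g z x.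
Proof.
rewrite !sum_b; case: f => a b; case: g => c d; case: a; case: b; case: c; case: d; case: y; case: x;
  rewrite /sigma1 /=; psimp; try ring.
Qed.

Lemma s1_compl y x y' x' :
  \sum_ab (sigma1 C ab y' x')^* * sigma1 C ab y x = 2%:R * ((y == y') && (x == x'))%:R.
Proof.
rewrite sum_bool2; case: y; case: x; case: y'; case: x';
  rewrite /sigma1 /=; psimp; try ring.
Qed.
End P.

Section P.
Variable C : numClosedFieldType.

Lemma prod_sum n (F : 'I_n -> bool -> C) :
  \sum_(z : bits n) \prod_j F j (z j) = \prod_j \sum_b F j b.
Proof. by rewrite bigA_distr_bigA. Qed.

Lemma prod_sum2 n (F : 'I_n -> bool * bool -> C) :
  \sum_(f : pauli n) \prod_j F j (f j) = \prod_j \sum_b F j b.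
Proof. by rewrite bigA_distr_bigA. Qed.

Lemma prod_eq n (y x : bits n) : \prod_j ((y j == x j)%:R : C) = (y == x)%:R.
Proof.
case: (eqVneq y x) => [->|ne]; first by rewrite big1 // => j _; rewrite eqxx.
have [j Hj] : exists j, y j != x j.
  apply/existsP; apply: contraR ne; rewrite negb_exists => /forallP H.
  by apply/eqP/ffunP => j; move: (H j); rewrite negbK => /eqP.
by rewrite (bigD1 j) //= (negbTE Hj) mul0r.
Qed.

Lemma sigma_herm n (f : pauli n) y x : (sigma C f y x)^* = sigma C f x y.
Proof. rewrite /sigma rmorph_prod; apply: eq_bigr => j _; exact: s1_herm. Qed.

Lemma sigma_sq n (f : pauli n) y x :
  \sum_z sigma C f y z * sigma C f z x = (y == x)%:R.
Proof.
transitivity (\prod_j \sum_b sigma1 C (f j) (y j) b * sigma1 C (f j) b (x j)).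
  rewrite -prod_sum; apply: eq_bigr => z _; by rewrite /sigma -big_split.
rewrite -prod_eq; apply: eq_bigr => j _; exact: s1_sq.
Qed.

Lemma sigma_comm n (f g : pauli n) y x :
  \sum_z sigma C g y z * sigma C f z x =
  (-1) ^+ omega f g * \sum_z sigma C f y z * sigma C g z x.
Proof.
rewrite /omega signr_odd -prodrXr.
transitivity (\prod_j \sum_b sigma1 C (g j) (y j) b * sigma1 C (f j) b (x j)).
  rewrite -prod_sum; apply: eq_bigr => z _; by rewrite /sigma -big_split.
have -> : \sum_z sigma C f y z * sigma C g z x = \prod_j \sum_b sigma1 C (f j) (y j) b * sigma1 C (g j) b (x j).
  rewrite -prod_sum; apply: eq_bigr => z _; by rewrite /sigma -big_split.
rewrite -big_split /=; apply: eq_bigr => j _; exact: s1_comm.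
Qed.

Lemma sigma_compl n y x y' x' :
  \sum_(f : pauli n) (sigma C f y' x')^* * sigma C f y x =
  2%:R ^+ n * ((y == y') && (x == x'))%:R.
Proof.
rewrite (eq_bigr (fun f : pauli n => \prod_j ((sigma1 C (f j) (y' j) (x' j))^* * sigma1 C (f j) (y j) (x j)))); last first.
  by move=> f _; rewrite /sigma rmorph_prod -big_split.
rewrite (prod_sum2 (fun j ab => (sigma1 C ab (y' j) (x' j))^* * sigma1 C ab (y j) (x j))).
rewrite (eq_bigr (fun j => 2%:R * (((y j == y' j) && (x j == x' j))%:R : C))); last first.
  by move=> j _; exact: s1_compl.
rewrite big_split /= prodr_const card_ord; congr (_ * _).
have -> : ((y == y') && (x == x'))%:R = (y == y')%:R * ((x == x')%:R : C) by rewrite -natrM mulnb.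
rewrite -!prod_eq -big_split /=; apply: eq_bigr => j _.
by rewrite -natrM mulnb.
Qed.

End P.

Lemma odd_sum (I : Type) (r : seq I) (F : I -> nat) :
  odd (\sum_(i <- r) F i) = \big[addb/false]_(i <- r) odd (F i).
Proof. elim: r => [|a r IH]; by rewrite ?big_nil ?big_cons // oddD IH. Qed.

Lemma omega_xor n (f g h : pauli n) : omega f (pxor g h) = omega f g (+) omega f h.
Proof.
rewrite /omega !odd_sum -big_split /=; apply: eq_bigr => j _.
rewrite ffunE /=.
by case: (f j) => [[] []]; case: (g j) => [[] []]; case: (h j) => [[] []].
Qed.

Lemma omega0 n (f : pauli n) : omega f (pzero n) = false.
Proof. rewrite /omega big1 // => j _; rewrite ffunE /=; by case: (f j) => [[] []]. Qed.

Lemma omega_big n M (f : pauli n) (h : 'I_M -> pauli n) :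
  omega f (\big[@pxor n/pzero n]_(a < M) h a) = \big[addb/false]_(a < M) omega f (h a).
Proof.
apply: (big_morph (fun g => omega f g)); [exact: omega_xor | exact: omega0].
Qed.

Lemma bigxor_true (I : finType) (b : I -> bool) :
  \big[addb/false]_i b i -> exists i, b i.
Proof.
move=> H; apply/existsP; apply: contraLR H; rewrite negb_exists => /forallP Hb.
by rewrite big1 // => i _; apply/negbTE.
Qed.

Section U.
Variable C : numClosedFieldType.

Lemma sum_delta (I : finType) (i0 : I) (F : I -> C) :
  \sum_i (i0 == i)%:R * F i = F i0.
Proof.
rewrite (bigD1 i0) //= eqxx mul1r big1 ?addr0 // => i Hi.
by rewrite eq_sym (negbTE Hi) mul0r.
Qed.

Lemma apply_op_comp n (A B : op C n) v y :
  apply_op A (apply_op B v) y = apply_op (fun y x => \sum_z A y z * B z x) v y.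
Proof.
rewrite /apply_op.
under eq_bigr do rewrite big_distrr /=.
rewrite exchange_big /=; apply: eq_bigr => x _.
by rewrite big_distrl /=; apply: eq_bigr => z _; rewrite mulrA.
Qed.

End U.

Section U.
Variable C : numClosedFieldType.

Lemma expand n (Phi w : bits n -> C) y : unit_vec Phi ->
  \sum_(f : pauli n) apply_op (sigma C f) Phi y *
     \sum_y' (apply_op (sigma C f) Phi y')^* * w y' = 2%:R ^+ n * w y.
Proof.
move=> U; rewrite /apply_op.
transitivity (\sum_(f : pauli n) \sum_x \sum_y' \sum_x'
   ((sigma C f y' x')^* * sigma C f y x) * (Phi x * (Phi x')^* * w y')).
  apply: eq_bigr => f _; rewrite big_distrl; apply: eq_bigr => x _.
  rewrite big_distrr; apply: eq_bigr => y' _; rewrite rmorph_sum big_distrl big_distrr.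
  by apply: eq_bigr => x' _; rewrite rmorphM /=; ring.
rewrite exchange_big /=.
under eq_bigr do rewrite exchange_big /=.
under eq_bigr do under eq_bigr do rewrite exchange_big /=.
under eq_bigr do under eq_bigr do under eq_bigr do rewrite -big_distrl sigma_compl /=.
transitivity (\sum_x 2%:R ^+ n * (Phi x * (Phi x)^* * w y)).
  apply: eq_bigr => x _.
  have E : forall y' x', 2%:R ^+ n * (((y == y') && (x == x'))%:R : C) * (Phi x * (Phi x')^* * w y')
     = (2%:R ^+ n * (y == y')%:R) * ((x == x')%:R * (Phi x * (Phi x')^* * w y')).
    by move=> y' x'; rewrite -mulnb natrM; ring.
  under eq_bigr do under eq_bigr do rewrite E.
  under eq_bigr do rewrite -big_distrr /= sum_delta -mulrA.
  by rewrite -big_distrr /= sum_delta.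
rewrite -big_distrr /= -big_distrl /=.
by move: U; rewrite /unit_vec => ->; rewrite mul1r.
Qed.

End U.

Section U2.
Variable C : numClosedFieldType.

Lemma eig_sq (e : C) : e = 1 \/ e = -1 -> e * e = 1 /\ e^* = e.
Proof. by case=> ->; rewrite ?mulrNN mulr1 ?rmorphN rmorph1. Qed.

Lemma apply_op_ext n (A : op C n) u v : (forall x, u x = v x) -> forall y, apply_op A u y = apply_op A v y.
Proof. by move=> H y; apply: eq_bigr => x _; rewrite H. Qed.

Lemma apply_opZ n (A : op C n) (k : C) v y : apply_op A (fun x => k * v x) y = k * apply_op A v y.
Proof. rewrite /apply_op big_distrr; apply: eq_bigr => x _ /=; ring. Qed.

Lemma coef_zero n (f g : pauli n) (Phi w : bits n -> C) e :
  omega f g -> e = 1 \/ e = -1 ->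
  (forall y, apply_op (sigma C g) Phi y = e * Phi y) ->
  (forall y, apply_op (sigma C g) w y = e * w y) ->
  \sum_y (apply_op (sigma C f) Phi y)^* * w y = 0.
Proof.
move=> om he hP hw; have [ee ce] := eig_sq he.
set c := \sum_y _.
have hw' : forall y, w y = e * apply_op (sigma C g) w y.
  by move=> y; rewrite hw mulrA ee mul1r.
have K : forall z, \sum_y sigma C g y z * (apply_op (sigma C f) Phi y)^* =
                   - e * (apply_op (sigma C f) Phi z)^*.
  move=> z.
  transitivity ((apply_op (sigma C g) (apply_op (sigma C f) Phi) z)^*).
    rewrite /apply_op rmorph_sum; apply: eq_bigr => y _.
    by rewrite rmorphM /= sigma_herm mulrC.
  rewrite apply_op_comp.
  rewrite (_ : apply_op _ Phi z = - apply_op (sigma C f) (apply_op (sigma C g) Phi) z).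
    rewrite (apply_op_ext (sigma C f) hP) apply_opZ rmorphN rmorphM /= ce; ring.
  rewrite apply_op_comp /apply_op -sumrN; apply: eq_bigr => x _.
  by rewrite sigma_comm om expr1 mulN1r mulNr.
have : c = - c.
  rewrite {1}/c.
  under eq_bigr do rewrite hw'.
  set v := apply_op (sigma C f) Phi in K *.
  transitivity (e * \sum_z (\sum_y sigma C g y z * (v y)^*) * w z).
    transitivity (\sum_y \sum_z e * (sigma C g y z * (v y)^*) * w z).
      apply: eq_bigr => y _; rewrite /apply_op big_distrr big_distrr /=.
      by apply: eq_bigr => z _ /=; ring.
    rewrite exchange_big big_distrr /=; apply: eq_bigr => z _.
    by rewrite big_distrl big_distrr /=; apply: eq_bigr => y _ /=; ring.
  under eq_bigr do rewrite K.
  rewrite /c big_distrr /= -sumrN; apply: eq_bigr => z _.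
  transitivity (- (e * e) * ((v z)^* * w z)); first ring.
  by rewrite ee mulN1r.
move/eqP; rewrite -subr_eq0 opprK -mulr2n mulrn_eq0 /=.
by move/eqP.
Qed.

End U2.

Section U3.
Variable C : numClosedFieldType.

Definition Hyps n (S : {set pauli n}) (Phi w : bits n -> C) (T : pauli n -> Prop) :=
  (forall f, f \in S -> exists e : C, (e = 1 \/ e = -1) /\ forall y, apply_op (sigma C f) Phi y = e * Phi y) /\
  (forall f, f \notin S -> exists g, T g /\ omega f g) /\
  (forall g, T g -> exists e : C, (e = 1 \/ e = -1) /\ (forall y, apply_op (sigma C g) Phi y = e * Phi y) /\
        (forall y, apply_op (sigma C g) w y = e * w y)).

Lemma uniq_eig0 n (S : {set pauli n}) (Phi w : bits n -> C) T :
  unit_vec Phi -> Hyps S Phi w T ->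
  forall y, 2%:R ^+ n * w y = #|S|%:R * (\sum_x (Phi x)^* * w x) * Phi y.
Proof.
move=> U [hS [hT hg]] y; rewrite -(expand w y U) (bigID (mem S)) /=.
rewrite [X in _ + X]big1 ?addr0; last first.
  move=> f fS; have [g [Tg om]] := hT f fS; have [e [he [h1 h2]]] := hg g Tg.
  by rewrite (coef_zero om he h1 h2) mulr0.
transitivity (\sum_(f in S) Phi y * \sum_x (Phi x)^* * w x).
  apply: (eq_big _ _ (fun f => erefl)) => f fS; have [e [he h]] := hS f fS; have [ee ce] := eig_sq he.
  have -> : \sum_y' (apply_op (sigma C f) Phi y')^* * w y' = e * \sum_x (Phi x)^* * w x.
    rewrite big_distrr; apply: eq_bigr => x _; rewrite h rmorphM /= ce; ring.
  rewrite h; transitivity ((e * e) * (Phi y * \sum_x (Phi x)^* * w x)); first ring.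
  by rewrite ee mul1r.
by rewrite sumr_const -mulr_natl; ring.
Qed.

End U3.

Section U4.
Variable C : numClosedFieldType.

Lemma unit_nz n (Phi : bits n -> C) : unit_vec Phi -> exists y, Phi y != 0.
Proof.
move=> U; apply/existsP; apply: contraLR isT => /existsPn H.
have : \sum_x Phi x * (Phi x)^* = 0 by rewrite big1 // => x _; move: (H x); rewrite negbK => /eqP ->; rewrite mul0r.
by move: U; rewrite /unit_vec => -> /eqP; rewrite oner_eq0.
Qed.

Lemma uniq_eig n (S : {set pauli n}) (Phi w : bits n -> C) T :
  unit_vec Phi -> Hyps S Phi w T ->
  forall y, w y = (\sum_x (Phi x)^* * w x) * Phi y.
Proof.
move=> U H.
have HP : Hyps S Phi Phi T.
  case: H => [hS [hT hg]]; split=> //; split=> // g Tg.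
  by have [e [he [h1 _]]] := hg g Tg; exists e.
have ipP : \sum_x (Phi x)^* * Phi x = 1 by rewrite -U; apply: eq_bigr => x _; rewrite mulrC.
have [y0 Hy0] := unit_nz U.
have E := uniq_eig0 U HP y0; rewrite ipP mulr1 in E.
have E2 : (2%:R ^+ n : C) = #|S|%:R.
  by apply: (mulIf Hy0).
have nz : (2%:R ^+ n : C) != 0 by rewrite expf_neq0 // pnatr_eq0.
move=> y; apply: (mulfI nz); rewrite (uniq_eig0 U H y) E2; ring.
Qed.

End U4.

Section K.
Variable C : numClosedFieldType.

Definition qf n (rho : op C n) (v : bits n -> C) :=
  \sum_(x : bits n) \sum_(y : bits n) (v x)^* * rho x y * v y.

Lemma qf_expand n (rho : op C n) v u (t : C) :
  qf rho (fun x => v x + t * u x) =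
  qf rho v + t^* * (\sum_x \sum_y (u x)^* * rho x y * v y)
           + t * (\sum_x \sum_y (v x)^* * rho x y * u y) + t^* * t * qf rho u.
Proof.
rewrite /qf !big_distrr -!big_split /=; apply: eq_bigr => x _.
rewrite !big_distrr -!big_split /=; apply: eq_bigr => y _.
rewrite rmorphD rmorphM /=; ring.
Qed.

Lemma quad (s q : C) : 0 <= q -> (forall t : C, t \is Num.real -> 0 <= t * s + t ^+ 2 * q) -> s = 0.
Proof.
move=> q0 H.
have sr : s \is Num.real.
  have := H 1 (rpred1 _); rewrite mul1r expr1n mul1r => /ger0_real h.
  by rewrite -(addrK q s); apply: rpredB => //; apply: ger0_real.
have q1 : 0 < q + 1 by rewrite ltr_wpDl.
have q1n : q + 1 != 0 by rewrite gt_eqF.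
set t := - s / (q + 1).
have tr : t \is Num.real by rewrite rpredM ?rpredN ?rpredV // ger0_real // ltW.
have := H t tr.
have -> : t * s + t ^+ 2 * q = - (s * s^* / (q + 1) ^+ 2).
  rewrite (conj_Creal sr) /t; field; exact: q1n.
have h0 : 0 <= s * s^* / (q + 1) ^+ 2 by rewrite divr_ge0 // ?mul_conjC_ge0 // exprn_ge0 // ltW.
rewrite oppr_ge0 => h1.
have : s * s^* / (q + 1) ^+ 2 = 0 by apply/eqP; rewrite eq_le h1 h0.
move/eqP; rewrite mulf_eq0 invr_eq0 expf_eq0 (negbTE q1n) andbF orbF mulf_eq0 conjC_eq0 orbb.
by move/eqP.
Qed.

End K.

Section K2.
Variable C : numClosedFieldType.

Lemma psd_kernel0 n (rho : op C n) v : (forall u, 0 <= qf rho u) -> qf rho v = 0 ->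
  forall u, \sum_x \sum_y (u x)^* * rho x y * v y = 0 /\
            \sum_x \sum_y (v x)^* * rho x y * u y = 0.
Proof.
move=> psd qv u.
set B := \sum_x \sum_y (u x)^* * rho x y * v y.
set A := \sum_x \sum_y (v x)^* * rho x y * u y.
have q0 := psd u.
have h1 : A + B = 0.
  apply: (quad q0) => t tr.
  have := psd (fun x => v x + t * u x); rewrite qf_expand qv (conj_Creal tr).
  by rewrite -/A -/B; congr (0 <= _); ring.
have h2 : 'i * (A - B) = 0.
  apply: (quad q0) => t tr.
  have := psd (fun x => v x + ('i * t) * u x); rewrite qf_expand qv rmorphM /= (conj_Creal tr) conjCi.
  rewrite -/A -/B; congr (0 <= _).
  transitivity (t * ('i * (A - B)) + t ^+ 2 * ('i * 'i * -1) * qf rho u); last by rewrite iE; ring.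
  ring.
move/eqP: h2; rewrite mulf_eq0 (negbTE (neq0Ci C)) /= subr_eq0 => /eqP AB.
move: h1; rewrite AB -mulr2n => /eqP; rewrite mulrn_eq0 /= => /eqP h.
by split.
Qed.

Lemma psd_kernel n (rho : op C n) v : (forall u, 0 <= qf rho u) -> qf rho v = 0 ->
  forall k, \sum_a (v a)^* * rho a k = 0 /\ \sum_b rho k b * v b = 0.
Proof.
move=> psd qv k; have [h1 h2] := psd_kernel0 psd qv (fun x => (k == x)%:R).
split.
  rewrite -[in RHS]h2; apply: eq_bigr => a _.
  rewrite (eq_bigr (fun y => (k == y)%:R * ((v a)^* * rho a y))) ?sum_delta //.
  by move=> y _; ring.
rewrite -[in RHS]h1 /=.
transitivity (\sum_x (k == x)%:R * \sum_y rho x y * v y); first by rewrite sum_delta.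
apply: eq_bigr => x _; rewrite big_distrr; apply: eq_bigr => y _ /=.
by rewrite rmorph_nat; ring.
Qed.

End K2.

Section K3.
Variable C : numClosedFieldType.

Lemma sum_delta' (I : finType) (i0 : I) (F : I -> C) :
  \sum_i F i * (i == i0)%:R = F i0.
Proof. rewrite -[RHS](sum_delta i0); apply: eq_bigr => i _; by rewrite mulrC eq_sym. Qed.

Lemma stepB n (rho G : op C n) (e : C) :
  density rho -> e = 1 \/ e = -1 ->
  (forall y x, (G y x)^* = G x y) ->
  (forall y x, \sum_z G y z * G z x = (y == x)%:R) ->
  \sum_x \sum_y rho x y * G y x = e ->
  forall y x, \sum_z G y z * rho z x = e * rho y x /\ \sum_z rho y z * G z x = e * rho y x.
Proof.
move=> [psd tr] he Gh Gsq Te; have [ee ce] := eig_sq he.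
pose Q := fun y x => ((y == x)%:R : C) - e * G y x.
have Qh : forall y x, (Q y x)^* = Q x y.
  by move=> y x; rewrite /Q rmorphB rmorphM rmorph_nat /= ce Gh eq_sym.
have Q2 : forall y x, \sum_z Q y z * Q z x = 2%:R * Q y x.
  move=> y x.
  rewrite (eq_bigr (fun z => (y == z)%:R * ((z == x)%:R - e * G z x) + (- e) * (G y z * (z == x)%:R) + (e * e) * (G y z * G z x))); last by move=> z _; rewrite /Q; ring.
  rewrite !big_split /= sum_delta -!big_distrr /= sum_delta' Gsq ee /Q; ring.
have TQ : \sum_x \sum_y rho x y * Q y x = 0.
  rewrite (eq_bigr (fun x => rho x x - e * \sum_y rho x y * G y x)); last first.
    move=> x _; rewrite /Q.
    rewrite (eq_bigr (fun y => rho x y * (y == x)%:R - e * (rho x y * G y x))); last by move=> y _; ring.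
    by rewrite sumrB sum_delta' big_distrr.
  by rewrite sumrB -big_distrr /= Te tr ee subrr.
have S0 : \sum_k qf rho (fun x => Q x k) = 0.
  transitivity (\sum_x \sum_y rho x y * \sum_k Q y k * Q k x); last first.
    rewrite (eq_bigr (fun x => 2%:R * \sum_y rho x y * Q y x)); first by rewrite -big_distrr /= TQ mulr0.
    move=> x _; rewrite big_distrr; apply: eq_bigr => y _ /=; rewrite Q2; ring.
  rewrite /qf exchange_big /=; apply: eq_bigr => x _.
  rewrite exchange_big /=; apply: eq_bigr => y _.
  rewrite big_distrr /=; apply: eq_bigr => k _; rewrite Qh; ring.
have qk : forall k, qf rho (fun x => Q x k) = 0.
  move=> k; apply: (psumr_eq0P _ S0) => // i _; exact: psd.
have K := fun k => psd_kernel psd (qk k).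
have K1 : forall k x, \sum_a G k a * rho a x = e * rho k x.
  move=> k x; have [h _] := K k x.
  have : rho k x - e * \sum_a G k a * rho a x = 0.
    rewrite -[RHS]h.
    transitivity (\sum_a ((k == a)%:R * rho a x - e * (G k a * rho a x))).
      by rewrite sumrB sum_delta big_distrr.
    by apply: eq_bigr => a _ /=; rewrite Qh /Q; ring.
  move/eqP; rewrite subr_eq0 => /eqP ->; by rewrite mulrA ee mul1r.
have K2 : forall x k, \sum_b rho x b * G b k = e * rho x k.
  move=> x k; have [_ h] := K k x.
  have : rho x k - e * \sum_b rho x b * G b k = 0.
    rewrite -[RHS]h.
    transitivity (\sum_b (rho x b * (b == k)%:R - e * (rho x b * G b k))).
      by rewrite sumrB sum_delta' big_distrr.
    by apply: eq_bigr => b _ /=; rewrite /Q; ring.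
  move/eqP; rewrite subr_eq0 => /eqP ->; by rewrite mulrA ee mul1r.
by move=> y x; split; [apply: K1 | apply: K2].
Qed.

End K3.

Section T.
Variables (n M : nat) (party : 'I_n -> 'I_M) (a : 'I_M).

Definition bz : bits n := [ffun _ => false].
Definition mg (x z : bits n) := Defs.merge party a x z.
Definition clr (x : bits n) := mg x bz.
Definition apart (x : bits n) := mg bz x.
Definition inZc (z : bits n) := [forall j, (party j != a) ==> ~~ z j].

Lemma apart_mg x z : inZc z -> apart (mg x z) = z.
Proof.
move=> /forallP H; apply/ffunP => j; rewrite /clr /apart /mg /bz /Defs.merge !ffunE.
case: ifP => pj; move: (H j); rewrite pj /= => //.
by move=> /negbTE ->.
Qed.

Lemma clr_mg x z : clr (mg x z) = clr x.
Proof. apply/ffunP => j; rewrite /clr /apart /mg /bz /Defs.merge !ffunE; by case: (party j == a). Qed.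

Lemma mg_clr_apart X : mg (clr X) (apart X) = X.
Proof. apply/ffunP => j; rewrite /clr /apart /mg /bz /Defs.merge !ffunE; by case: (party j == a). Qed.

Lemma apart_inZc X : inZc (apart X).
Proof. apply/forallP => j; rewrite /clr /apart /mg /bz /Defs.merge !ffunE; by case: (party j == a). Qed.

Lemma apart_neq X Y : apart X != apart Y -> exists j, party j = a /\ X j != Y j.
Proof.
move=> H.
suff : [exists j, (party j == a) && (X j != Y j)].
  by case/existsP => j /andP [/eqP pj nj]; exists j.
apply: contraR H; rewrite negb_exists => /forallP Hj.
apply/eqP/ffunP => j; rewrite /clr /apart /mg /bz /Defs.merge !ffunE.
case: ifP => // pj.
by move: (Hj j); rewrite pj /= negbK => /eqP.
Qed.

Variable C : numClosedFieldType.

Lemma sum_reidx (z : bits n) (F : bits n -> C) : inZc z ->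
  \sum_(x | clr x == x) F (mg x z) = \sum_(X | apart X == z) F X.
Proof.
move=> Hz; symmetry.
rewrite (reindex_onto (fun x => mg x z) clr) /=; last first.
  by move=> X /eqP <-; rewrite mg_clr_apart.
apply: eq_bigl => x; rewrite apart_mg // eqxx /= clr_mg //.
Qed.

Lemma trace_ptrace (rho G : op C n) :
  (forall y x : bits n, (exists j, party j = a /\ y j != x j) -> G y x = 0) ->
  (forall y x z : bits n, inZc z -> G (mg y z) (mg x z) = G (clr y) (clr x)) ->
  \sum_X \sum_Y rho X Y * G Y X =
  \sum_(x | clr x == x) \sum_(y | clr y == y) ptrace party a rho x y * G y x.
Proof.
move=> G1 G2.
transitivity (\sum_(z | inZc z) \sum_(x | clr x == x) \sum_(y | clr y == y)
                rho (mg x z) (mg y z) * G (mg y z) (mg x z)); last first.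
  rewrite exchange_big /=; apply: eq_bigr => x /eqP cx.
  rewrite exchange_big /=; apply: eq_bigr => y /eqP cy.
  rewrite /ptrace big_distrl /=; apply: eq_bigr => z Hz.
  by rewrite G2 // cx cy.
rewrite (partition_big apart inZc) /=; last by move=> X _; exact: apart_inZc.
apply: eq_bigr => z Hz; rewrite -sum_reidx //.
apply: eq_bigr => x cx.
rewrite (sum_reidx (fun Y => rho (mg x z) Y * G Y (mg x z))) //.
rewrite (bigID (fun Y => apart Y == z)) /= [X in _ + X]big1 ?addr0; last first.
  move=> Y HY; rewrite G1 ?mulr0 //.
  have [j [pj nj]] : exists j, party j = a /\ Y j != mg x z j.
    apply: apart_neq; by rewrite apart_mg.
  by exists j.
by apply: eq_bigr.
Qed.

End T.

Section Ten.
Variables (n1 n2 M : nat) (p1 : 'I_n1 -> 'I_M) (p2 : 'I_n2 -> 'I_M) (a : 'I_M).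
Notation P := (join_party p1 p2).

Lemma jp_l i : P (lshift n2 i) = p1 i.
Proof. by rewrite /join_party (unsplitK (inl i)). Qed.
Lemma jp_r i : P (rshift n1 i) = p2 i.
Proof. by rewrite /join_party (unsplitK (inr i)). Qed.

Lemma lpart_merge (x z : bits (n1 + n2)) :
  lpart (Defs.merge P a x z) = Defs.merge p1 a (lpart x) (lpart z).
Proof. by apply/ffunP => i; rewrite !ffunE jp_l. Qed.
Lemma rpart_merge (x z : bits (n1 + n2)) :
  rpart (Defs.merge P a x z) = Defs.merge p2 a (rpart x) (rpart z).
Proof. by apply/ffunP => i; rewrite !ffunE jp_r. Qed.

Lemma zc_cat (z1 : bits n1) (z2 : bits n2) :
  [forall j, (P j != a) ==> ~~ catb z1 z2 j] =
  [forall i, (p1 i != a) ==> ~~ z1 i] && [forall i, (p2 i != a) ==> ~~ z2 i].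
Proof.
apply/forallP/andP => [H|[/forallP H1 /forallP H2] j].
  split; apply/forallP => i.
    by move: (H (lshift n2 i)); rewrite jp_l ffunE (unsplitK (inl i)).
  by move: (H (rshift n1 i)); rewrite jp_r ffunE (unsplitK (inr i)).
case: (splitP j) => i Ej.
  have -> : j = lshift n2 i by apply: val_inj.
  by rewrite jp_l ffunE (unsplitK (inl i)).
have -> : j = rshift n1 i by apply: val_inj.
by rewrite jp_r ffunE (unsplitK (inr i)).
Qed.

Variable C : numClosedFieldType.

Lemma ptrace_tensor (A : op C n1) (B : op C n2) x y :
  ptrace P a (tensor_op A B) x y =
  ptrace p1 a A (lpart x) (lpart y) * ptrace p2 a B (rpart x) (rpart y).
Proof.
rewrite /ptrace big_mkcond sum_cat.
rewrite [X in _ = X * _]big_mkcond [X in _ = _ * X]big_mkcond big_distrl /=.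
apply: eq_bigr => z1 _; rewrite big_distrr /=; apply: eq_bigr => z2 _.
rewrite zc_cat /tensor_op !lpart_merge !rpart_merge lpart_cat rpart_cat.
case: [forall i, _]; case: [forall i, _]; by rewrite /= ?mulr0 ?mul0r.
Qed.

End Ten.

Section Ten2.
Variable C : numClosedFieldType.
Variables (n1 n2 : nat).

Lemma qf_tensor (A : op C n1) (Phi : bits n2 -> C) (V : bits (n1 + n2) -> C) :
  qf (tensor_op A (proj Phi)) V = qf A (fun x1 => \sum_x2 (Phi x2)^* * V (catb x1 x2)).
Proof.
rewrite /qf sum_cat; apply: eq_bigr => x1 _.
transitivity (\sum_x2 \sum_y1 \sum_y2 (V (catb x1 x2))^* * A x1 y1 * (Phi x2 * (Phi y2)^*) * V (catb y1 y2)).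
  apply: eq_bigr => x2 _; rewrite sum_cat; apply: eq_bigr => y1 _; apply: eq_bigr => y2 _.
  by rewrite /tensor_op /proj !lpart_cat !rpart_cat; ring.
rewrite exchange_big /=; apply: eq_bigr => y1 _.
rewrite rmorph_sum !big_distrl /=; apply: eq_bigr => x2 _.
rewrite big_distrr /=; apply: eq_bigr => y2 _.
rewrite rmorphM /= conjCK; ring.
Qed.

Lemma trace_tensor (A : op C n1) (Phi : bits n2 -> C) :
  unit_vec Phi -> \sum_x tensor_op A (proj Phi) x x = \sum_x A x x.
Proof.
move=> U; rewrite sum_cat; apply: eq_bigr => x1 _.
rewrite /tensor_op /proj.
under eq_bigr do rewrite !lpart_cat !rpart_cat.
by rewrite -big_distrr /= U mulr1.
Qed.

Lemma proj_tensor (u : bits n1 -> C) (v : bits n2 -> C) x y :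
  proj (tensor_vec u v) x y = tensor_op (proj u) (proj v) x y.
Proof. rewrite /proj /tensor_vec /tensor_op rmorphM /=; ring. Qed.

Lemma unit_tensor (u : bits n1 -> C) (v : bits n2 -> C) :
  unit_vec u -> unit_vec v -> unit_vec (tensor_vec u v).
Proof.
move=> Uu Uv; rewrite /unit_vec sum_cat -[RHS]Uu; apply: eq_bigr => x1 _.
rewrite /tensor_vec.
have E : forall a b c d : C, a * b * (c * d)^* = (a * c^*) * (b * d^*) by move=> *; rewrite rmorphM; ring.
under eq_bigr do rewrite !lpart_cat !rpart_cat E.
by rewrite -big_distrr /= Uv mulr1.
Qed.

End Ten2.

Lemma eq_parts n1 n2 (Y X : bits (n1 + n2)) :
  (Y == X) = (lpart Y == lpart X) && (rpart Y == rpart X).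
Proof.
apply/eqP/andP => [->|[/eqP h1 /eqP h2]]; first by [].
by rewrite -(cat_parts Y) -(cat_parts X) h1 h2.
Qed.

Lemma merge_eq n M (p : 'I_n -> 'I_M) a (u v z : bits n) :
  (Defs.merge p a u z == Defs.merge p a v z) = [forall i, (p i != a) ==> (u i == v i)].
Proof.
apply/eqP/forallP => [H i|H]; last first.
  apply/ffunP => i; rewrite !ffunE; case: ifP => // /negbT pi.
  by move: (H i); rewrite pi /= => /eqP.
apply/implyP => pi; move/ffunP: H => /(_ i); rewrite !ffunE (negbTE pi) => ->.
by [].
Qed.

Section G.
Variable C : numClosedFieldType.
Variables (n1 n2 M : nat) (p1 : 'I_n1 -> 'I_M) (p2 : 'I_n2 -> 'I_M) (a : 'I_M).
Notation P := (join_party p1 p2).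

Definition Gop (g : pauli n2) : op C (n1 + n2) :=
  fun Y X => (lpart Y == lpart X)%:R * sigma C g (rpart Y) (rpart X).

Lemma Gop_herm g Y X : (Gop g Y X)^* = Gop g X Y.
Proof. by rewrite /Gop rmorphM rmorph_nat /= sigma_herm eq_sym. Qed.

Lemma Gop_sq g Y X : \sum_Z Gop g Y Z * Gop g Z X = (Y == X)%:R.
Proof.
rewrite sum_cat eq_parts.
transitivity (\sum_z1 (lpart Y == z1)%:R * ((z1 == lpart X)%:R * (rpart Y == rpart X)%:R) : C).
  apply: eq_bigr => z1 _; rewrite -(sigma_sq C g) big_distrr /= big_distrr /=.
  apply: eq_bigr => z2 _; rewrite /Gop !lpart_cat !rpart_cat; ring.
by rewrite sum_delta -natrM mulnb.
Qed.

Lemma Gop_G1 S g : g \in colocal p2 S a ->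
  forall Y X : bits (n1 + n2), (exists j, P j = a /\ Y j != X j) -> Gop g Y X = 0.
Proof.
rewrite inE => /andP [_ /forallP Hg] Y X [j [pj nj]].
case: (splitP j) => i Ej.
  have ej : j = lshift n2 i by apply: val_inj.
  rewrite /Gop; suff -> : (lpart Y == lpart X) = false by rewrite mul0r.
  apply/negbTE; apply: contra nj => /eqP/ffunP/(_ i); by rewrite !ffunE ej => ->.
have ej : j = rshift n1 i by apply: val_inj.
have gi : g i = (false, false).
  by move: (Hg i); rewrite -(jp_r p1 p2) -ej pj eqxx /= => /eqP.
rewrite /Gop /sigma (bigD1 i) //= gi /sigma1 /= !ffunE -ej addbF.
by rewrite (negbTE nj) !mul0r mulr0.
Qed.

Lemma Gop_G2 S g : g \in colocal p2 S a ->
  forall Y X z : bits (n1 + n2), inZc P a z ->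
  Gop g (mg P a Y z) (mg P a X z) = Gop g (clr P a Y) (clr P a X).
Proof.
rewrite inE => /andP [_ /forallP Hg] Y X z _.
rewrite /Gop /clr /mg !lpart_merge !rpart_merge !merge_eq; congr (_ * _).
apply: eq_bigr => i _; rewrite !ffunE.
case: ifP => // /eqP pi.
have : g i = (false, false) by move: (Hg i); rewrite pi eqxx /= => /eqP.
by move=> ->; rewrite /sigma1 /= !addbF !eqxx.
Qed.

Lemma Gop_trace g (Psi : bits n1 -> C) (Phi : bits n2 -> C) (e : C) :
  unit_vec Psi -> unit_vec Phi ->
  (forall y, apply_op (sigma C g) Phi y = e * Phi y) ->
  \sum_X \sum_Y proj (tensor_vec Psi Phi) X Y * Gop g Y X = e.
Proof.
move=> U1 U2 h.
have U := unit_tensor U1 U2.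
rewrite exchange_big /=.
transitivity (\sum_Y e * (tensor_vec Psi Phi Y * (tensor_vec Psi Phi Y)^*)); last first.
  by rewrite -big_distrr /= U mulr1.
apply: eq_bigr => Y _.
transitivity ((tensor_vec Psi Phi Y)^* * \sum_X Gop g Y X * tensor_vec Psi Phi X).
  rewrite big_distrr; apply: eq_bigr => X _ /=; rewrite /proj; ring.
suff -> : \sum_X Gop g Y X * tensor_vec Psi Phi X = e * tensor_vec Psi Phi Y by ring.
rewrite sum_cat.
transitivity (\sum_x1 (lpart Y == x1)%:R * (Psi x1 * (e * Phi (rpart Y)))); last first.
  by rewrite sum_delta /tensor_vec; ring.
apply: eq_bigr => x1 _; rewrite -h /apply_op !big_distrr /=.
apply: eq_bigr => x2 _; rewrite /Gop /tensor_vec !lpart_cat !rpart_cat; ring.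
Qed.

End G.

Section F.
Variable C : numClosedFieldType.

Lemma ptrace_ext n M (p : 'I_n -> 'I_M) a (r1 r2 : op C n) x y :
  (forall x y, r1 x y = r2 x y) -> ptrace p a r1 x y = ptrace p a r2 x y.
Proof. by move=> H; apply: eq_bigr => z _; rewrite H. Qed.

Lemma qf_ext n (A : op C n) u v : (forall x, u x = v x) -> qf A u = qf A v.
Proof. by move=> H; apply: eq_bigr => x _; apply: eq_bigr => y _; rewrite !H. Qed.

Lemma ptr_nz n M (p : 'I_n -> 'I_M) a (Phi : bits n -> C) :
  unit_vec Phi -> exists x, ptrace p a (proj Phi) x x != 0.
Proof.
move=> U; have [X HX] := unit_nz U; exists X; apply/eqP => H.
have Hn : forall z : bits n, [forall j, (p j != a) ==> ~~ z j] ->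
   0 <= proj Phi (Defs.merge p a X z) (Defs.merge p a X z).
  by move=> z _; apply: mul_conjC_ge0.
have := psumr_eq0P Hn H (apart_inZc p a X).
have -> : Defs.merge p a X (apart p a X) = X.
  apply/ffunP => j; rewrite /apart /mg /bz /Defs.merge !ffunE; by case: (p j == a).
by move/eqP; rewrite /proj mul_conjC_eq0 (negbTE HX).
Qed.

End F.

Section Main.
Variable C : numClosedFieldType.
Variables (M n1 n2 : nat) (p1 : 'I_n1 -> 'I_M) (p2 : 'I_n2 -> 'I_M).
Notation P := (join_party p1 p2).

Lemma CL (rho : op C (n1 + n2)) (Psi : bits n1 -> C) (Phi : bits n2 -> C) S a g e :
  density rho ->
  (forall a x y, ptrace P a rho x y = ptrace P a (proj (tensor_vec Psi Phi)) x y) ->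
  unit_vec Psi -> unit_vec Phi ->
  g \in colocal p2 S a -> e = 1 \/ e = -1 ->
  (forall y, apply_op (sigma C g) Phi y = e * Phi y) ->
  forall Y X, \sum_Z @Gop C n1 n2 g Y Z * rho Z X = e * rho Y X /\
              \sum_Z rho Y Z * @Gop C n1 n2 g Z X = e * rho Y X.
Proof.
move=> dens hpt U1 U2 hg he hP.
apply: stepB => //; [exact: Gop_herm | exact: Gop_sq |].
rewrite (trace_ptrace rho (Gop_G1 C (n1:=n1) (p1:=p1) hg) (Gop_G2 C (n1:=n1) (p1:=p1) hg)).
rewrite -(Gop_trace (n1:=n1) U1 U2 hP) (trace_ptrace (proj (tensor_vec Psi Phi)) (Gop_G1 C (n1:=n1) (p1:=p1) hg) (Gop_G2 C (n1:=n1) (p1:=p1) hg)).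
apply: eq_bigr => x _; apply: eq_bigr => y _; by rewrite hpt.
Qed.


Lemma col_eig (rho : op C (n1 + n2)) g e :
  (forall Y X, \sum_Z @Gop C n1 n2 g Y Z * rho Z X = e * rho Y X) ->
  forall y1 X y2, apply_op (sigma C g) (fun y2 => rho (catb y1 y2) X) y2 = e * rho (catb y1 y2) X.
Proof.
move=> H y1 X y2; rewrite -H sum_cat.
transitivity (\sum_z1 (y1 == z1)%:R * \sum_z2 sigma C g y2 z2 * rho (catb z1 z2) X).
  by rewrite sum_delta.
apply: eq_bigr => z1 _; rewrite big_distrr; apply: eq_bigr => z2 _ /=.
rewrite /Gop !lpart_cat !rpart_cat; ring.
Qed.

Lemma row_eig (rho : op C (n1 + n2)) g e :
  e^* = e ->
  (forall Y X, \sum_Z rho Y Z * @Gop C n1 n2 g Z X = e * rho Y X) ->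
  forall y1 X y2, apply_op (sigma C g) (fun y2 => (rho X (catb y1 y2))^*) y2 = e * (rho X (catb y1 y2))^*.
Proof.
move=> ce H y1 X y2.
rewrite -[in RHS]ce -rmorphM /= -H rmorph_sum sum_cat.
transitivity (\sum_z1 (y1 == z1)%:R * \sum_z2 sigma C g y2 z2 * (rho X (catb z1 z2))^*).
  by rewrite sum_delta.
apply: eq_bigr => z1 _; rewrite big_distrr; apply: eq_bigr => z2 _ /=.
rewrite rmorphM /= Gop_herm /Gop !lpart_cat !rpart_cat; ring.
Qed.

Lemma notinS (S : {set pauli n2}) f :
  self_dual S -> sum_of_colocal p2 S -> f \notin S ->
  exists g, (exists a, g \in colocal p2 S a) /\ omega f g.
Proof.
move=> sd hs fS; move: (sd f); rewrite (negbTE fS) => /esym /negbT.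
rewrite negb_forall => /existsP [g]; rewrite negb_imply negbK => /andP [gS om].
have [h [hh Eg]] := (hs g).1 gS.
rewrite Eg omega_big in om; have [a oa] := bigxor_true om.
by exists (h a); split => //; exists a.
Qed.


Lemma colocal_sub (S : {set pauli n2}) a g : g \in colocal p2 S a -> g \in S.
Proof. by rewrite inE => /andP []. Qed.

Lemma fwd (rho : op C (n1 + n2)) (Psi : bits n1 -> C) (Phi : bits n2 -> C) S :
  self_dual S -> unit_vec Psi -> unit_vec Phi ->
  (forall f, f \in S -> exists e : C, (e = 1 \/ e = -1) /\ forall y, apply_op (sigma C f) Phi y = e * Phi y) ->
  sum_of_colocal p2 S ->
  Gamma P (tensor_vec Psi Phi) rho ->
  exists L : bits n1 -> bits n1 -> C, forall x1 x2 y1 y2,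
     rho (catb x1 x2) (catb y1 y2) = L x1 y1 * Phi x2 * (Phi y2)^*.
Proof.
move=> sd U1 U2 E hs [dens hpt].
pose T := fun g => exists a, g \in colocal p2 S a.
have HT : forall g, T g -> exists e : C, (e = 1 \/ e = -1) /\
    (forall y, apply_op (sigma C g) Phi y = e * Phi y) /\
    (forall Y X, \sum_Z @Gop C n1 n2 g Y Z * rho Z X = e * rho Y X /\
              \sum_Z rho Y Z * @Gop C n1 n2 g Z X = e * rho Y X).
  move=> g [a hg]; have [e [he hP]] := E g (colocal_sub hg); exists e; split => //; split => //.
  exact: (CL dens hpt U1 U2 hg he hP).
have hyp_col : forall y1 X, Hyps S Phi (fun y2 => rho (catb y1 y2) X) T.
  move=> y1 X; split => //; split; first by move=> f; exact: notinS sd hs.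
  move=> g Tg; have [e [he [hP hC]]] := HT g Tg; exists e; split => //; split => //.
  by apply: col_eig => Y X'; exact: (hC Y X').1.
have hyp_row : forall y1 X, Hyps S Phi (fun y2 => (rho X (catb y1 y2))^*) T.
  move=> y1 X; split => //; split; first by move=> f; exact: notinS sd hs.
  move=> g Tg; have [e [he [hP hC]]] := HT g Tg; exists e; split => //; split => //.
  have [_ ce] := eig_sq he.
  by apply: row_eig => // Y X'; exact: (hC Y X').2.
have K1 := fun y1 X => uniq_eig U2 (hyp_col y1 X).
have K2 := fun y1 X => uniq_eig U2 (hyp_row y1 X).
exists (fun x1 y1 => \sum_z (Phi z)^* * (\sum_x (Phi x)^* * (rho (catb x1 z) (catb y1 x))^*)^*).
move=> x1 x2 y1 y2.
rewrite (K1 x1 (catb y1 y2) x2) /= [RHS]mulrAC; congr (_ * _).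
rewrite big_distrl /=; apply: eq_bigr => z _.
have h := K2 y1 (catb x1 z) y2; simpl in h.
rewrite -[rho _ _]conjCK h rmorphM /=; ring.
Qed.

End Main.

Unset Implicit Arguments.

Theorem corollary1 (C : numClosedFieldType) (M n1 n2 : nat)
  (p1 : 'I_n1 -> 'I_M) (p2 : 'I_n2 -> 'I_M)
  (S1 : {set pauli n1}) (S2 : {set pauli n2})
  (Psi' : bits n1 -> C) (Phi : bits n2 -> C) :
  stabilizer_state S1 Psi' ->
  stabilizer_state S2 Phi ->
  sum_of_colocal p2 S2 ->
  forall rho : op C (n1 + n2),
    Gamma (join_party p1 p2) (tensor_vec Psi' Phi) rho <->
    exists rho' : op C n1,
      Gamma p1 Psi' rho' /\ rho = tensor_op rho' (proj Phi).
Proof.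
move=> [sd1 [U1 E1]] [sd2 [U2 E2]] hs rho.
have U2' : \sum_x (Phi x)^* * Phi x = 1.
  by rewrite -U2; apply: eq_bigr => x _; rewrite mulrC.
have PT : forall a x y, ptrace (join_party p1 p2) a (proj (tensor_vec Psi' Phi)) x y =
    ptrace p1 a (proj Psi') (lpart x) (lpart y) * ptrace p2 a (proj Phi) (rpart x) (rpart y).
  move=> a x y; rewrite -ptrace_tensor; apply: ptrace_ext => X Y; exact: proj_tensor.
split.
- move=> HG; have [L HL] := fwd sd2 U1 U2 E2 hs HG.
  pose rho' := fun x1 y1 => \sum_z rho (catb x1 z) (catb y1 z).
  have Erho : rho = tensor_op rho' (proj Phi).
    apply: functional_extensionality => X; apply: functional_extensionality => Y.
    rewrite -(cat_parts X) -(cat_parts Y) HL /tensor_op /proj !lpart_cat !rpart_cat /rho'.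
    rewrite -mulrA; congr (_ * _).
    under eq_bigr do rewrite HL -mulrA.
    by rewrite -big_distrr /= U2 mulr1.
  exists rho'; split => //.
  case: HG => [[psd tr] hpt].
  split; [split|].
  + move=> v; have h := psd (fun X => v (lpart X) * Phi (rpart X)).
    rewrite Erho in h.
    have h' : 0 <= qf (tensor_op rho' (proj Phi)) (fun X : bits (n1 + n2) => v (lpart X) * Phi (rpart X)) := h.
    rewrite qf_tensor in h'.
    have -> : \sum_x \sum_y (v x)^* * rho' x y * v y = qf rho' v by [].
    suff -> : qf rho' v = qf rho' (fun x1 : bits n1 => \sum_x2 (Phi x2)^* *
        (v (lpart (catb x1 x2)) * Phi (rpart (catb x1 x2)))) by [].
    apply: qf_ext => x1 /=; rewrite -[LHS]mulr1 -U2' big_distrr /=; apply: eq_bigr => x2 _.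
    rewrite lpart_cat rpart_cat; ring.
  + by rewrite Erho trace_tensor in tr.
  + move=> a x1 y1; have [x2 hx2] := ptr_nz p2 a U2.
    have h := hpt a (catb x1 x2) (catb y1 x2).
    rewrite PT Erho ptrace_tensor !lpart_cat !rpart_cat in h.
    exact: (mulIf hx2).
- move=> [rho' [[[psd tr] hpt] ->]]; split; [split|].
  + move=> V.
    have -> : \sum_x \sum_y (V x)^* * tensor_op rho' (proj Phi) x y * V y = qf (tensor_op rho' (proj Phi)) V by [].
    rewrite qf_tensor; exact: psd.
  + by rewrite trace_tensor.
  + by move=> a x y; rewrite ptrace_tensor PT hpt.
Qed.
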